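(* For all sufficiently large $n$ the following holds for $T\sim\mathcal{R}(n,2)$. (1) The probability that there exist $R\subseteq A_1$ with $|R|\ge n/20$, $S\subseteq A_2$ with $|S|\ge n/20$ and a permutation $\pi$ of $V(T)$ such that $L_\pi(T)$ has no edge between $R$ and $S$, is at most $1/n$. (2) For every $D\in\{+,-\}^2$ and every ordered pair $(u,v)$ of two distinct vertices of $T$, $\Pr\left[|C_D((u,v))|\ge 1.1n/4\right]\le 1/n^3$.
   Context: $\mathcal{R}(n,2)$ is the probability space of bipartite tournaments with vertex classes $A_1,A_2$ of size $n$ each, every edge between $A_1$ and $A_2$ oriented independently and uniformly at random. For a permutation (bijection) $\pi:V(T)\to\{1,\ldots,|V(T)|\}$, $L_\pi(T)$ is the spanning subgraph of $T$ consisting of all edges $(u,v)\in E(T)$ with $\pi(u)<\pi(v)$. For $D\in\{+,-\}^d$ and a sequence $A'=(v_1,\ldots,v_d)$ of distinct vertices, $C_D(A')$ is the set of vertices $w$ of $T$ such that for each $j$, $(v_j,w)\in E(T)$ if $D(j)=+$ and $(w,v_j)\in E(T)$ if $D(j)=-$. *)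

(* Defs.v *)
From mathcomp Require Import all_boot all_order all_algebra.
Set Implicit Arguments. Unset Strict Implicit. Unset Printing Implicit Defensive.
Import Order.TTheory GRing.Theory Num.Theory.

(* Vertex set of a bipartite tournament with classes A1 = inl 'I_n, A2 = inr 'I_n. *)
Definition vtx (n : nat) : finType := ('I_n + 'I_n)%type.

(* A bipartite tournament in R(n,2): o (i,j) = true iff the edge between
   i in A1 and j in A2 is oriented A1 -> A2, i.e. (inl i, inr j) in E(T). *)
Definition btour (n : nat) : finType := {ffun 'I_n * 'I_n -> bool}.

Definition edge n (T : btour n) (x y : vtx n) : bool :=
  match x, y with
  | inl i, inr j => T (i, j)
  | inr j, inl i => ~~ T (i, j)
  | _, _ => false
  end.

Definition prob n (E : pred (btour n)) : rat :=
  (#|[set T : btour n | E T]|)%:R / (#|btour n|)%:R.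

(* L_pi(T) : edges (x,y) of T with pi x < pi y; pi : V(T) -> {0..|V|-1}
   (a bijection; positions shifted by one with respect to {1..|V|}). *)
Definition Ledge n (T : btour n) (pi : vtx n -> 'I_(n + n)) (x y : vtx n) : bool :=
  edge T x y && (pi x < pi y)%N.

Definition inA1 n (R : {set 'I_n}) (x : vtx n) : bool :=
  if x is inl i then i \in R else false.
Definition inA2 n (S : {set 'I_n}) (x : vtx n) : bool :=
  if x is inr j then j \in S else false.

Definition no_edge_between n (T : btour n) (pi : vtx n -> 'I_(n + n))
  (R S : {set 'I_n}) : bool :=
  [forall x, forall y, Ledge T pi x y ==>
     ~~ ((inA1 R x && inA2 S y) || (inA2 S x && inA1 R y))].

Definition bad_event n (T : btour n) : bool :=
  [exists R : {set 'I_n}, exists S : {set 'I_n},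
   exists pi : {ffun vtx n -> 'I_(n + n)},
     [&& (n <= 20 * #|R|)%N, (n <= 20 * #|S|)%N,
         injectiveb pi & no_edge_between T pi R S]].

(* C_D(A') for D in {+,-}^d (true = +) and A' = (v_0,...,v_{d-1}). *)
Definition CD n (T : btour n) d (D : 'I_d -> bool) (vs : 'I_d -> vtx n)
  : {set vtx n} :=
  [set w | [forall j : 'I_d, if D j then edge T (vs j) w else edge T w (vs j)]].

Definition pair2 n (u v : vtx n) : 'I_2 -> vtx n :=
  fun j => if j == ord0 then u else v.

(* Main.v *)
Require Import Defs.
From Stdlib Require Import Zify.
From mathcomp Require Import all_boot all_order all_algebra zify ring.
Set Implicit Arguments. Unset Strict Implicit.

Lemma growG n k : (n.+1)^k * (n - k) <= n^k.+1.
Proof.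
elim: k => [|k IH]; first by rewrite expn0 expn1 mul1n subn0.
rewrite expnS [n ^ k.+2]expnS.
have h : n.+1 * (n - k.+1) <= n * (n - k) by nia.
rewrite -mulnA (mulnC n.+1) -mulnA.
move: IH h; move: (n.+1 ^ k) (n ^ k.+1) => a b IH h.
rewrite mulnC in h.
apply: (leq_trans (leq_mul (leqnn a) h)).
by rewrite mulnCA leq_mul2l IH orbT.
Qed.

Lemma step_gen c k m : (c.+1) * k <= m -> c * (m.+1)^k <= c.+1 * m^k.
Proof.
case: m => [|m] h.
  have -> : k = 0 by lia.
  by rewrite !expn0 !muln1.
rewrite -(leq_pmul2r (ltn0Sn m)).
have h1 : c * m.+1 <= c.+1 * (m.+1 - k) by nia.
have h2 := growG m.+1 k.
rewrite expnS (mulnC m.+1) in h2.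
move: h1 h2; move: (m.+2 ^ k) (m.+1 ^ k) (m.+1 - k) => a b d h1 h2.
apply: (@leq_trans (a * (c.+1 * d))).
  by rewrite mulnAC (mulnC a) leq_mul2r h1 orbT.
by rewrite mulnCA -mulnA leq_mul2l h2 orbT.
Qed.

Lemma NL1gen (c k b n : nat) : 2 * k <= b -> 2 ^ c * (b + b) ^ k <= 2 ^ b ->
  b <= n -> 2 ^ c * (n + n) ^ k <= 2 ^ n.
Proof.
rewrite !addnn -!mul2n.
move=> hb base.
elim: n => [|n IH] hn.
  by move: base; have -> : b = 0 by lia.
case: (ltngtP b n.+1) => [lt|gt|e]; last by rewrite -e.
- have hn' : b <= n by [].
  have st := @step_gen 1 k n.
  have st' : n.+1 ^ k <= 2 * n ^ k.
    rewrite mul1n in st. apply: st. lia.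
  rewrite expnS !expnMn.
  apply: (@leq_trans (2 * (2 ^ c * (2 ^ k * n ^ k)))).
    rewrite [2 * _]mulnCA leq_mul2l; apply/orP; right.
    rewrite [2 * _]mulnCA leq_mul2l; apply/orP; right. exact: st'.
  rewrite leq_mul2l; apply/orP; right.
  by move: (IH hn'); rewrite expnMn.
- by move: gt hn; rewrite ltnNge => /negP.
Qed.

Lemma NL1base : 2 ^ 800 * (32768 + 32768) ^ 1200 <= 2 ^ 32768.
Proof. zify. vm_compute. reflexivity. Qed.

Lemma NL1 n t : 32768 <= n -> n * n <= 400 * t ->
  n * 2 ^ n * 2 ^ n * (n + n) ^ (n + n) <= 2 ^ t.
Proof.
move=> hn ht.
have n1 : 2400 <= n by apply: leq_trans hn.
have H : 2 ^ 800 * (n + n) ^ 1200 <= 2 ^ n.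
  apply: (NL1gen _ NL1base) => //.
clear hn.
have hX : n <= (n + n) ^ n.
  apply: (@leq_trans (2 ^ n)); first exact: ltnW (ltn_expl _ (ltnSn 1)).
  rewrite leq_exp2r; clear H; lia.
apply: (@leq_trans ((n + n) ^ n * 2 ^ n * 2 ^ n * (n + n) ^ (n + n))).
  by apply: leq_mul => //; apply: leq_mul => //; apply: leq_mul.
have eB : (n + n) ^ n * 2 ^ n * 2 ^ n * (n + n) ^ (n + n)
   = 2 ^ (n + n) * (n + n) ^ (n + (n + n)).
  by rewrite !expnD; ring.
rewrite eB -(@leq_exp2r _ _ 400) // expnMn -!expnM.
have -> : (n + n) * 400 = 800 * n by lia.
have -> : (n + (n + n)) * 400 = 1200 * n by lia.
rewrite !expnM -expnMn.
apply: (@leq_trans ((2 ^ n) ^ n)); first by rewrite leq_exp2r //; lia.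
rewrite -!expnM; apply: leq_pexp2l => //; lia.
Qed.

Lemma NL2gen (K c k b s : nat) : c.+1 * k <= b.+1 ->
  K * b.+1 ^ k * c ^ b <= c.+1 ^ b ->
  b <= s -> K * s.+1 ^ k * c ^ s <= c.+1 ^ s.
Proof.
move=> hb base.
elim: s => [|s IH] hs.
  by move: base; have -> : b = 0 by lia.
case: (ltngtP b s.+1) => [lt|gt|e]; last by rewrite -e.
- have hs' : b <= s by [].
  have st : c * s.+2 ^ k <= c.+1 * s.+1 ^ k.
    apply: (@step_gen c k s.+1). lia.
  rewrite [c ^ s.+1]expnS [c.+1 ^ s.+1]expnS.
  move: (IH hs') st; move: (s.+1 ^ k) (s.+2 ^ k) (c ^ s) (c.+1 ^ s) => B C D E h1 h2.
  apply: (@leq_trans (K * (c.+1 * B) * D)).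
    rewrite -!mulnA leq_mul2l; apply/orP; right.
    by rewrite !mulnA (mulnC C) leq_mul2r h2 orbT.
  by rewrite mulnCA -mulnA leq_mul2l h1 orbT.
- by move: gt hs; rewrite ltnNge => /negP.
Qed.

Lemma NL2base : 59 ^ 3 * 721 ^ 3 * 20 ^ 720 <= 21 ^ 720.
Proof. zify. vm_compute. reflexivity. Qed.

Lemma NL2pow n : 59 * 721 <= n -> n ^ 3 * 20 ^ (n %/ 59) <= 21 ^ (n %/ 59).
Proof.
move=> hn.
have h1 : n < 59 * (n %/ 59).+1 by lia.
have h2 : 720 <= n %/ 59 by lia.
have := NL2gen (K := 59 ^ 3) (c := 20) (k := 3) (b := 720) (s := n %/ 59) isT NL2base h2.
apply: leq_trans.
rewrite leq_mul2r; apply/orP; right.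
rewrite -expnMn leq_exp2r //. exact: ltnW.
Qed.

Lemma ffact_ratio n x s : 59 * s <= n -> 11 * n <= 40 * x ->
  21 ^ s * n ^_ s <= 80 ^ s * x ^_ s.
Proof.
elim: s => [|s IH] hs hx; first by rewrite !expn0 !ffactn0.
rewrite !ffactnSr !expnS.
have h : 21 * (n - s) <= 80 * (x - s) by lia.
have hs' : 59 * s <= n by lia.
have e1 : 21 * 21 ^ s * (n ^_ s * (n - s)) = (21 ^ s * n ^_ s) * (21 * (n - s)) by ring.
have e2 : 80 * 80 ^ s * (x ^_ s * (x - s)) = (80 ^ s * x ^_ s) * (80 * (x - s)) by ring.
by rewrite e1 e2; apply: leq_mul => //; apply: IH.
Qed.

Lemma NL2 n x : 59 * 721 <= n -> 11 * n <= 40 * x ->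
  n ^ 3 * 'C(n, n %/ 59) <= 4 ^ (n %/ 59) * 'C(x, n %/ 59).
Proof.
move=> hn hx.
set s := n %/ 59.
have hs : 59 * s <= n by rewrite /s; lia.
have sx : s <= x by lia.
have P := NL2pow hn. rewrite -/s in P.
have F := ffact_ratio hs hx.
have key : n ^ 3 * n ^_ s <= 4 ^ s * x ^_ s.
  rewrite -(@leq_pmul2r (20 ^ s)) ?expn_gt0 //.
  apply: (@leq_trans (21 ^ s * n ^_ s)).
    by rewrite mulnAC leq_mul2r P orbT.
  apply: (leq_trans F).
  by rewrite mulnAC -expnMn.
have xs0 : 0 < x ^_ s by rewrite ffact_gt0.
rewrite -(leq_pmul2r xs0).
have e1 : n ^ 3 * 'C(n, s) * x ^_ s = 'C(x, s) * (n ^ 3 * n ^_ s).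
  by rewrite -!bin_ffact; ring.
have e2 : 4 ^ s * 'C(x, s) * x ^_ s = 'C(x, s) * (4 ^ s * x ^_ s) by ring.
by rewrite e1 e2 leq_mul2l key orbT.
Qed.


Lemma card_fix (X : finType) (A : {set X}) (g : X -> bool) :
  #|[set T : {ffun X -> bool} | [forall x in A, T x == g x]]| * 2 ^ #|A| = 2 ^ #|X|.
Proof.
pose F := fun x : X => (if x \in A then pred1 (g x) else predT) : pred bool.
have -> : #|[set T : {ffun X -> bool} | [forall x in A, T x == g x]]| = #|(family F : simpl_pred {ffun X -> bool})|.
  apply: eq_card => T; rewrite inE; apply/forall_inP/familyP => [H x|H x xA].
    by rewrite /F; case: ifP => // xA; rewrite inE; apply: H.
  by have := H x; rewrite /F xA inE.
rewrite card_family foldrE big_map big_enum /=.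
rewrite (bigID (fun x => x \in A)) /=.
rewrite (eq_bigr (fun _ => 1)); last by move=> x xA; rewrite /F xA card1.
rewrite (eq_bigr (fun _ => 2) (P := fun x => x \notin A)); last first.
  by move=> x /negbTE xA; rewrite /F xA; rewrite -card_bool; apply: eq_card.
rewrite !prod_nat_const exp1n mul1n -expnD addnC.
rewrite -(cardsC A); congr (2 ^ (_ + _)); apply: eq_card => x; by rewrite inE.
Qed.
 

Section Part2.
Variables (n : nat) (p1 p2 : 'I_n -> 'I_n * 'I_n) (a b : bool).
Hypotheses (i1 : injective p1) (i2 : injective p2) (dj : forall j j', p1 j != p2 j').

Definition cnt (T : btour n) := [set j | (T (p1 j) == a) && (T (p2 j) == b)].

Lemma fix_J (J : {set 'I_n}) : #|[set T : btour n | J \subset cnt T]| * 4 ^ #|J| = 2 ^ (n * n).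
Proof.
pose A := p1 @: J :|: p2 @: J.
pose g x := if x \in p1 @: J then a else b.
have cA : #|A| = #|J| + #|J|.
  rewrite cardsU !card_imset //.
  have -> : p1 @: J :&: p2 @: J = set0.
    apply/setP => x; rewrite !inE; apply/negP => /andP[/imsetP[j _ ->] /imsetP[j' _ e]].
    by move: (dj j j'); rewrite e eqxx.
  by rewrite cards0 subn0.
have -> : 4 ^ #|J| = 2 ^ #|A| by rewrite cA addnn -mul2n expnM.
have := card_fix A g.
rewrite card_prod !card_ord => <-.
congr (_ * _); apply: eq_card => T; rewrite !inE.
apply/subsetP/forall_inP => [H x | H j jJ].
  rewrite !inE => /orP[] /imsetP[j jJ ->].
    by rewrite /g imset_f //; move: (H j jJ); rewrite inE => /andP[/eqP -> _].
  rewrite /g ifF; last first.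
    by apply/negP => /imsetP[j' _ e]; move: (dj j' j); rewrite e eqxx.
  by move: (H j jJ); rewrite inE => /andP[_ /eqP ->].
rewrite inE.
have m1 : p1 j \in A by rewrite inE imset_f.
have m2 : p2 j \in A by rewrite inE imset_f ?orbT.
have h1 := H _ m1. have h2 := H _ m2.
rewrite /g imset_f // in h1.
rewrite /g ifF in h2; last first.
  by apply/negP => /imsetP[j' _ e]; move: (dj j' j); rewrite e eqxx.
by rewrite h1 h2.
Qed.

Lemma sum_binom s :
  (\sum_(T : btour n) 'C(#|cnt T|, s)) * 4 ^ s = 'C(n, s) * 2 ^ (n * n).
Proof.
have e1 : forall T : btour n, 'C(#|cnt T|, s) =
   \sum_(J : {set 'I_n}) (if (J \subset cnt T) && (#|J| == s) then 1 else 0).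
  move=> T; rewrite -cards_draws -sum1_card big_mkcond /=.
  by apply: eq_bigr => J _; rewrite inE.
rewrite (eq_bigr _ (fun T _ => e1 T)) exchange_big /= big_distrl /=.
rewrite (eq_bigr (fun J : {set 'I_n} => if #|J| == s then 2 ^ (n * n) else 0)).
  rewrite -big_mkcond /= sum_nat_const.
  have hd := card_draws 'I_n s; rewrite card_ord in hd.
  by rewrite -hd; congr (_ * _); apply: eq_card => J; rewrite inE.
move=> J _.
case: eqP => [<-|_]; last by rewrite big1 // => T; rewrite andbF.
rewrite -(fix_J J); congr (_ * _).
rewrite (eq_bigr (fun T => if T \in [set T : btour n | J \subset cnt T] then 1 else 0)).
  by rewrite -big_mkcond sum1_card.
by move=> T _; rewrite inE andbT.
Qed.

Lemma event_bound s : s <= n ->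
  (forall x, 11 * n <= 40 * x -> n ^ 3 * 'C(n, s) <= 4 ^ s * 'C(x, s)) ->
  n ^ 3 * #|[set T : btour n | 11 * n <= 40 * #|cnt T|]| <= 2 ^ (n * n).
Proof.
move=> sn H.
have c0 : 0 < 'C(n, s) by rewrite bin_gt0.
rewrite -(leq_pmul2r c0) [X in _ <= X]mulnC -(sum_binom s) mulnAC.
rewrite -sum1_card big_distrr /= big_distrl /=.
rewrite [X in _ <= X]big_mkcond /=.
rewrite (big_mkcond (fun T => T \in _)) /=.
apply: leq_sum => T _.
case: ifP => // hT.
rewrite muln1 [X in _ <= X]mulnC; apply: H.
by move: hT; rewrite inE.
Qed.

End Part2.

Definition o1 : 'I_2 := @Ordinal 2 1 isT.

Lemma forall2 (P : pred 'I_2) : [forall k, P k] = P ord0 && P o1.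
Proof.
apply/forallP/andP => [H|[h0 h1] k]; first by split; apply: H.
case: k => m lt; case: m lt => [|[|m]] lt //.
  by rewrite (_ : Ordinal lt = ord0) //; apply/val_inj.
by rewrite (_ : Ordinal lt = o1) //; apply/val_inj.
Qed.

Lemma CD_ll n (T : btour n) D i1 i2 :
  CD T D (pair2 (inl i1) (inl i2)) =
  inr @: cnt (fun j => (i1, j)) (fun j => (i2, j)) (D ord0) (D o1) T.
Proof.
apply/setP => w; rewrite inE forall2 /pair2 /=.
case: w => [i|j].
  rewrite /=; case: (D ord0) => /=; apply/esym/negP => /imsetP[x _] //.
rewrite mem_imset; last by move=> x y [].
rewrite inE /=.
by case: (D ord0); case: (D o1); case: (T (i1, j)); case: (T (i2, j)).
Qed.

Lemma CD_rr n (T : btour n) D j1 j2 :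
  CD T D (pair2 (inr j1) (inr j2)) =
  inl @: cnt (fun i => (i, j1)) (fun i => (i, j2)) (~~ D ord0) (~~ D o1) T.
Proof.
apply/setP => w; rewrite inE forall2 /pair2 /=.
case: w => [i|j]; last first.
  rewrite /=; case: (D ord0) => /=; apply/esym/negP => /imsetP[x _] //.
rewrite mem_imset; last by move=> x y [].
rewrite inE /=.
by case: (D ord0); case: (D o1); case: (T (i, j1)); case: (T (i, j2)).
Qed.

Lemma CD_lr n (T : btour n) D i j :
  CD T D (pair2 (inl i) (inr j)) = set0.
Proof.
apply/setP => w; rewrite inE forall2 /pair2 /= inE.
by case: w => [i'|j'] /=; case: (D ord0); case: (D o1); rewrite ?andbF.
Qed.

Lemma CD_rl n (T : btour n) D i j :
  CD T D (pair2 (inr j) (inl i)) = set0.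
Proof.
apply/setP => w; rewrite inE forall2 /pair2 /= inE.
by case: w => [i'|j'] /=; case: (D ord0); case: (D o1); rewrite ?andbF.
Qed.

Section Part1.
Variable n : nat.
Definition KK := ({set 'I_n} * {set 'I_n} * {ffun vtx n -> 'I_(n + n)})%type.
Definition gpi (pi : {ffun vtx n -> 'I_(n + n)}) (x : 'I_n * 'I_n) : bool :=
  (pi (inr x.2) < pi (inl x.1))%N.
Definition Fk (k : KK) := [set T : btour n | [forall x in setX k.1.1 k.1.2, T x == gpi k.2 x]].
Definition condk (k : KK) := (n <= 20 * #|k.1.1|) && (n <= 20 * #|k.1.2|).

Lemma bad_in (T : btour n) : bad_event T -> exists k : KK, condk k && (T \in Fk k).
Proof.
move/existsP => [R /existsP [S /existsP [pi /and4P [hR hS hinj hne]]]].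
exists (R, S, pi); rewrite /condk hR hS /= inE.
apply/forall_inP => [[i j]]; rewrite in_setX /= => /andP [iR jS].
move/forallP: hne => hne.
have := hne (inl i); move/forallP => /(_ (inr j)); rewrite /Ledge /= iR jS /= => h1.
have := hne (inr j); move/forallP => /(_ (inl i)); rewrite /Ledge /= iR jS /= => h2.
have ne : (pi (inl i) : nat) != pi (inr j).
  move/injectiveP: hinj => inj.
  by rewrite val_eqE; apply/negP => /eqP /inj.
rewrite /gpi /=.
case: (T (i, j)) h1 h2 => /= h1 h2.
  by rewrite implybF -leqNgt in h1; apply/eqP/esym; rewrite ltn_neqAle h1 andbT eq_sym.
by rewrite implybF in h2; apply/eqP/esym/negbTE.
Qed.

Lemma card_setT (X : finType) : #|{set X}| = 2 ^ #|X|.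
Proof. by rewrite -[in RHS]cardsT -card_powerset powersetT cardsT. Qed.

Lemma avg (I : finType) (P : pred I) (x : I -> nat) M :
  (forall i, P i -> #|I| * x i <= M) -> \sum_(i | P i) x i <= M.
Proof.
move=> H.
have [I0|I0] := posnP #|I|.
  rewrite big1 // => i _; exfalso.
  by move: I0; rewrite (cardD1 i).
rewrite -(leq_pmul2l I0) big_distrr /=.
apply: (@leq_trans (\sum_(i | P i) M)); first exact: leq_sum.
rewrite (eq_bigl (fun i => i \in P)) // sum_nat_const leq_mul2r; apply/orP; right.
exact: max_card.
Qed.

Lemma cardKK : #|{: KK}| = 2 ^ n * 2 ^ n * (n + n) ^ (n + n).
Proof. by rewrite !card_prod !card_setT card_ffun card_sum !card_ord. Qed.

Lemma count_bad : 32768 <= n -> n * #|[set T : btour n | bad_event T]| <= 2 ^ (n * n).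
Proof.
move=> hn.
have step1 : #|[set T : btour n | bad_event T]| <= \sum_(k | condk k) #|Fk k|.
  rewrite -sum1_card.
  apply: (@leq_trans (\sum_(T in [set T : btour n | bad_event T]) \sum_(k | condk k) (if T \in Fk k then 1 else 0))).
    apply: leq_sum => T; rewrite inE => /bad_in [k /andP [ck Tk]].
    by rewrite (bigD1 k) //= Tk.
  apply: (@leq_trans (\sum_T \sum_(k | condk k) (if T \in Fk k then 1 else 0))).
    by rewrite [X in _ <= X](bigID (fun T => T \in [set T : btour n | bad_event T])) /= leq_addr.
  rewrite exchange_big /=; apply: leq_sum => k _.
  rewrite -sum1_card; apply: eq_leq; by rewrite [in RHS]big_mkcond.
rewrite mulnC; apply: (leq_trans (leq_mul step1 (leqnn n))).
rewrite big_distrl /=.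
apply: avg => -[[R S] pi] /andP [/= hR hS].
have hF := card_fix (setX R S) (gpi pi).
rewrite cardsX card_prod !card_ord in hF.
rewrite cardKK -[X in _ <= X]hF.
have ht : n * n <= 400 * (#|R| * #|S|).
  have := leq_mul hR hS.
  by rewrite (_ : 20 * #|R| * (20 * #|S|) = 400 * (#|R| * #|S|)) //; ring.
have := NL1 hn ht.
rewrite /Fk /=.
move: #|[set T : btour n | [forall x in setX R S, T x == gpi pi x]]| => F.
move: (2 ^ n) ((n + n) ^ (n + n)) (2 ^ (#|R| * #|S|)) => A X B h.
have -> : A * A * X * (F * n) = F * (n * A * A * X) by ring.
by rewrite leq_mul2l h orbT.
Qed.
End Part1.

Lemma part2 n : 59 * 721 <= n -> forall D (u v : vtx n), u != v ->
  n ^ 3 * #|[set T : btour n | 11 * n <= 40 * #|CD T D (pair2 u v)|]| <= 2 ^ (n * n).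
Proof.
move=> hn D u v uv.
have sn : n %/ 59 <= n by apply: leq_div.
have H : forall x, 11 * n <= 40 * x -> n ^ 3 * 'C(n, n %/ 59) <= 4 ^ (n %/ 59) * 'C(x, n %/ 59).
  by move=> x hx; apply: NL2.
case: u uv => [i1|j1]; case: v => [i2|j2] uv.
- have ne : i1 != i2 by apply: contraNneq uv => ->.
  have in1 : injective (fun j : 'I_n => (i1, j)) by move=> x y [].
  have in2 : injective (fun j : 'I_n => (i2, j)) by move=> x y [].
  have := event_bound (D ord0) (D o1) in1 in2 _ sn H.
  rewrite (_ : #|_| = #|[set T : btour n | 11 * n <= 40 * #|CD T D (pair2 (inl i1) (inl i2))|]|) //.
    by apply; move=> j j'; apply/negP => /eqP [e _]; move/eqP: ne; rewrite e.
  apply: eq_card => T; rewrite !inE CD_ll card_imset //; by move=> x y [].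
- rewrite (_ : #|_| = 0) ?muln0 //; apply: eq_card0 => T; rewrite inE CD_lr cards0 muln0.
  by rewrite leqn0 muln_eq0 /=; apply/negP => /eqP n0; move: hn; rewrite n0.
- rewrite (_ : #|_| = 0) ?muln0 //; apply: eq_card0 => T; rewrite inE CD_rl cards0 muln0.
  by rewrite leqn0 muln_eq0 /=; apply/negP => /eqP n0; move: hn; rewrite n0.
- have ne : j1 != j2 by apply: contraNneq uv => ->.
  have in1 : injective (fun i : 'I_n => (i, j1)) by move=> x y [].
  have in2 : injective (fun i : 'I_n => (i, j2)) by move=> x y [].
  have := event_bound (~~ D ord0) (~~ D o1) in1 in2 _ sn H.
  rewrite (_ : #|_| = #|[set T : btour n | 11 * n <= 40 * #|CD T D (pair2 (inr j1) (inr j2))|]|) //.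
    by apply; move=> j j'; apply/negP => /eqP [_ e]; move/eqP: ne; rewrite e.
  apply: eq_card => T; rewrite !inE CD_rr card_imset //; by move=> x y [].
Qed.

Import Order.TTheory GRing.Theory Num.Theory.

Lemma prob_le n (E : pred (btour n)) (c : nat) : (0 < c)%N ->
  (c * #|[set T | E T]| <= 2 ^ (n * n))%N -> (prob E <= 1 / (c%:R : rat))%R.
Proof.
move=> c0 h.
have cb : #|btour n| = (2 ^ (n * n))%N.
  by rewrite /btour card_ffun card_bool card_prod !card_ord.
rewrite /prob cb ler_pdivrMr ?ltr0n ?expn_gt0 // mul1r mulrC ler_pdivlMr ?ltr0n //.
by rewrite -natrM ler_nat mulnC.
Qed.

Local Open Scope ring_scope.

Theorem lemma3p4 :
  exists N : nat, forall n : nat, (N <= n)%N ->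
    prob (@bad_event n) <= 1 / n%:R
    /\ forall (D : 'I_2 -> bool) (u v : vtx n), u != v ->
         prob (fun T : btour n =>
                 (11 * n <= 40 * #|CD T D (pair2 u v)|)%N)
         <= 1 / (n ^ 3)%:R.
Proof.
exists (59 * 721)%N => n hn.
have n0 : (0 < n)%N by apply: leq_trans hn.
split.
  apply: prob_le => //.
  apply: count_bad.
  by apply: leq_trans hn.
move=> D u v uv.
apply: prob_le; first by rewrite expn_gt0 n0.
exact: part2.
Qed.
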